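(* Let $R^*_n$ and $c_n$ be real random variables defined on a probability space carrying data $(W_i)_{i=1}^n$, let $\delta_n>0$, $\tilde\delta_n\ge0$, $\gamma_n\in(0,1)$, and define $$\mathcal A_n=\sup_{\epsilon\ge\delta_n}\frac1\epsilon P(|R^*_n-c_n|\le\epsilon),\qquad \mathcal A_n(W)=\sup_{\epsilon\ge\delta_n}\frac1\epsilon P(|R^*_n-c_n|\le\epsilon\mid(W_i)_{i=1}^n).$$ Suppose that with probability at least $1-\gamma_n$ we have, for all $\epsilon\ge\delta_n$, $$P(|R^*_n-c_n|\le\epsilon)\le P(|R^*_n-c_n|\le\epsilon+\tilde\delta_n\mid(W_i)_{i=1}^n)+\gamma_n.$$ Then, with probability at least $1-\gamma_n$, $$\mathcal A_n\le\mathcal A_n(W)(1+\tilde\delta_n/\delta_n)+\gamma_n/\delta_n.$$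
   Context: In the paper $R^*_n$ is a bootstrap MinMax statistic and $c_n=c_n(\bar h,\alpha)$ its conditional $(1-\alpha)$-quantile given the data; the result is stated for these quantities but uses no further structure. *)

(* Defs.v *)
From HB Require Import structures.
From mathcomp Require Import all_boot all_order all_algebra.
From mathcomp Require Import all_classical all_reals all_analysis.
Set Implicit Arguments. Unset Strict Implicit. Unset Printing Implicit Defensive.
Import Order.TTheory GRing.Theory Num.Theory.
Local Open Scope classical_set_scope.
Local Open Scope ring_scope.

Definition sigmaW d (T : measurableType d) d' (T' : measurableType d') (n : nat)
  (W : 'I_n -> T -> T') : set (set T) :=
  <<s [set A | exists i, exists2 B, measurable B & A = W i @^-1` B] >>.

Definition is_cond_prob d (T : measurableType d) (R : realType)
  (P : probability T R) (G : set (set T)) (S : set T) (g : T -> R) : Prop :=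
  [/\ (forall B : set R, measurable B -> G (g @^-1` B)),
      P.-integrable setT (EFin \o g)
    & forall A, G A -> (\int[P]_(x in A) (g x)%:E = P (S `&` A))%E].

Definition near_event d (T : measurableType d) (R : realType)
  (Rs c : T -> R) (e : R) : set T := [set w | `|Rs w - c w| <= e].

Definition A_n d (T : measurableType d) (R : realType) (P : probability T R)
  (Rs c : T -> R) (delta : R) : R :=
  sup [set fine (P (near_event Rs c e)) / e | e in [set e | delta <= e]].

(* A_n(W)(w) = sup_{eps >= delta} (1/eps) P(|R* - c| <= eps | W)(w),
   pc w e being the chosen version of P(|R* - c| <= e | W) at w *)
Definition A_nW d (T : measurableType d) (R : realType)
  (pc : T -> R -> R) (delta : R) (w : T) : R :=
  sup [set pc w e / e | e in [set e | delta <= e]].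

(* Main.v *)
Require Import Defs.
From HB Require Import structures.
From mathcomp Require Import all_boot all_order all_algebra.
From mathcomp Require Import all_classical all_reals all_analysis.
From mathcomp Require Import ring lra.
Import Order.TTheory GRing.Theory Num.Theory.
Local Open Scope classical_set_scope.
Local Open Scope ring_scope.

Theorem theorem5p3 (d : measure_display) (T : measurableType d) (R : realType)
  (P : probability T R) (d' : measure_display) (T' : measurableType d')
  (n : nat) (W : 'I_n -> T -> T') (HW : forall i, measurable_fun setT (W i))
  (Rs c : T -> R) (HRs : measurable_fun setT Rs) (Hc : measurable_fun setT c)
  (pc : T -> R -> R)
  (Hpc : forall e : R, is_cond_prob P (sigmaW W) (near_event Rs c e) (fun w => pc w e))
  (Hpc01 : forall w e, 0 <= pc w e <= 1)
  (delta deltat gamma : R) (hdelta : 0 < delta) (hdeltat : 0 <= deltat)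
  (hgamma : 0 < gamma < 1) :
  (exists E : set T, [/\ measurable E, ((1 - gamma)%:E <= P E)%E &
     forall w, E w -> forall e, delta <= e ->
       fine (P (near_event Rs c e)) <= pc w (e + deltat) + gamma]) ->
  exists E : set T, [/\ measurable E, ((1 - gamma)%:E <= P E)%E &
     forall w, E w ->
       A_n P Rs c delta <= A_nW pc delta w * (1 + deltat / delta) + gamma / delta].
Proof.
move=> [E [mE PE HE]]; exists E; split => // w Ew.
have Hub : has_ubound [set pc w e / e | e in [set e | delta <= e]].
  exists delta^-1 => _ [e /= de <-].
  have e0 : 0 < e by apply: lt_le_trans de.
  rewrite ler_pdivrMr //; apply: le_trans (proj2 (andP (Hpc01 w e))) _.
  by rewrite mulrC ler_pdivlMr // mul1r.
have elt : forall e, delta <= e -> pc w e / e <= A_nW pc delta w.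
  by move=> e de; apply: ub_le_sup => //; exists e.
have A0 : 0 <= A_nW pc delta w.
  apply: le_trans (elt _ (lexx _)).
  by apply: divr_ge0; [exact: (proj1 (andP (Hpc01 w delta))) | exact: ltW].
apply: ge_sup; first by exists (fine (P (near_event Rs c delta)) / delta); exists delta => //=.
move=> _ [e /= de <-].
have e0 : 0 < e by apply: lt_le_trans de.
have edt : 0 < e + deltat by apply: ltr_wpDr.
have h1 := HE w Ew e de.
have ee : e <= e + deltat by rewrite lerDl.
have h2 := elt (e + deltat) (le_trans de ee).
apply: le_trans (_ : (pc w (e + deltat) + gamma) / e <= _).
  by rewrite ler_pM2r ?invr_gt0.
rewrite mulrDl lerD //; last first.
  by rewrite ler_pM2l ?(proj1 (andP hgamma)) // lef_pV2 ?posrE.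
have -> : pc w (e + deltat) / e = pc w (e + deltat) / (e + deltat) * (1 + deltat / e).
  by field; rewrite ?gt_eqF.
apply: ler_pM => //.
- by rewrite divr_ge0 ?(ltW edt) // (proj1 (andP (Hpc01 _ _))).
- by rewrite addr_ge0 // divr_ge0 // ltW.
- by rewrite lerD2l ler_wpM2l // lef_pV2 ?posrE.
Qed.
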